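(* In the noiseless case $\alpha=0$, let $\mathbf{W}_t$ be the Muon iterates with learning rate $\eta=1$ started from $\mathbf{W}_0=\mathbf{0}$, and let $\widehat{\mathbf{W}}_t=\widetilde{\mathbf{E}}^\top\mathbf{W}_t\mathbf{E}$. Then for every $t\ge0$, partitioning $\widehat{\mathbf{W}}_t$ into $M^2$ blocks $(\mathbf{B}_t)_{i,j}\in\mathbb{R}^{C\times C}$ (block $(i,j)$ has rows $(i-1)C+1,\dots,iC$ and columns $(j-1)C+1,\dots,jC$): each diagonal block has the form $(\mathbf{B}_t)_{i,i}=\omega_{i,t}\mathbf{I}_C+\mu_{i,t}(\mathbf{J}_C-\mathbf{I}_C)$, and each off-diagonal block ($i\ne j$) has the form $(\mathbf{B}_t)_{i,j}=\gamma_{i,j,t}\mathbf{J}_C$, for real numbers $\omega_{i,t}=(\widehat{\mathbf{W}}_t)_{C(i-1)+1,C(i-1)+1}$, $\mu_{i,t}=(\widehat{\mathbf{W}}_t)_{C(i-1)+2,C(i-1)+1}$, $\gamma_{i,j,t}=(\widehat{\mathbf{W}}_t)_{C(i-1)+1,C(j-1)+1}$.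
   Context: Setup: $K=MC$ items in $M$ groups of $C\ge2$ items; $\widetilde p_1>\dots>\widetilde p_M>0$, $\sum_i\widetilde p_i=1$, $p_j=\widetilde p_i/C$ for $j\in\{(i-1)C+1,\dots,iC\}$. $\mathbf{E},\widetilde{\mathbf{E}}\in\mathbb{R}^{K\times K}$ are orthogonal with columns $\mathbf{E}_j,\widetilde{\mathbf{E}}_j$. Noiseless labels: $p_{i\mid j}=1$ if $i=j$, $0$ otherwise. $\widehat p_{i\mid j}(\mathbf{W})=\exp(\widetilde{\mathbf{E}}_i^\top\mathbf{W}\mathbf{E}_j)/\sum_k\exp(\widetilde{\mathbf{E}}_k^\top\mathbf{W}\mathbf{E}_j)$; $\mathcal{L}(\mathbf{W})=-\sum_jp_j\log\widehat p_{j\mid j}(\mathbf{W})$. Muon: $\mathbf{W}_{t+1}=\mathbf{W}_t-\eta\,\mathrm{msgn}(\nabla\mathcal{L}(\mathbf{W}_t))$, $\mathrm{msgn}(\mathbf{U}\boldsymbol\Sigma\mathbf{V}^\top)=\mathbf{U}\,\mathrm{sgn}(\boldsymbol\Sigma)\mathbf{V}^\top$. $\mathbf{J}_C$ is the $C\times C$ all-ones matrix. *)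

(* Defs.v *)
From HB Require Import structures.
From mathcomp Require Import all_boot all_order all_algebra.
From mathcomp Require Import all_classical all_reals all_analysis.
Set Implicit Arguments. Unset Strict Implicit. Unset Printing Implicit Defensive.
Import Order.TTheory GRing.Theory Num.Theory.
Import numFieldNormedType.Exports.
Local Open Scope ring_scope.

Section Defs.
Variables (R : realType) (M C : nat).
Local Notation K := (M * C)%N.

(* item index (i-1)C + r  (0-based: i*C + r) for group i, position r *)
Lemma item_proof (i : 'I_M) (r : 'I_C) : (i * C + r < K)%N.
Proof.
case: i r => i Hi [r Hr] /=.
apply: (@leq_trans (i * C + C)); first by rewrite ltn_add2l.
by rewrite -mulSnr leq_mul2r Hi orbT.
Qed.
Definition item (i : 'I_M) (r : 'I_C) : 'I_K := Ordinal (item_proof i r).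

Lemma group_proof (j : 'I_K) : (j %/ C < M)%N.
Proof. by case: j => j Hj /=; rewrite ltn_divLR ?Hj //; case: C Hj => //; rewrite muln0. Qed.
Definition group (j : 'I_K) : 'I_M := Ordinal (group_proof j).

Definition orthogonal_mx n (A : 'M[R]_n) : Prop := A^T *m A = 1%:M.

Definition logit (Et E W : 'M[R]_K) (i j : 'I_K) : R := (Et^T *m W *m E) i j.

Definition phat (Et E W : 'M[R]_K) (i j : 'I_K) : R :=
  expR (logit Et E W i j) / \sum_(k < K) expR (logit Et E W k j).

Definition pitem (pt : 'I_M -> R) (j : 'I_K) : R :=
  pt (group j) / C%:R.

Definition loss (pt : 'I_M -> R) (Et E W : 'M[R]_K) : R :=
  - \sum_(j < K) pitem pt j * ln (phat Et E W j j).

Definition is_gradient (f : 'M[R]_K -> R) (W G : 'M[R]_K) : Prop :=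
  forall a b : 'I_K,
    is_derive (0 : R) (1 : R) (fun s : R => f (W + s *: delta_mx a b)) (G a b).

(* S = msgn(G): for some SVD G = U Sigma V^T, S = U sgn(Sigma) V^T
   (msgn is independent of the chosen SVD). *)
Definition is_msgn n (G S : 'M[R]_n) : Prop :=
  exists (U V : 'M[R]_n) (d : 'rV[R]_n),
    orthogonal_mx U /\ orthogonal_mx V /\ (forall k, 0 <= d 0 k) /\
    G = U *m diag_mx d *m V^T /\
    S = U *m diag_mx (map_mx Num.sg d) *m V^T.

Definition muon_iterates (pt : 'I_M -> R) (Et E : 'M[R]_K) (eta : R)
  (W : nat -> 'M[R]_K) : Prop :=
  W 0%N = 0 /\
  forall t, exists G S, is_gradient (loss pt Et E) (W t) G /\ is_msgn G S /\
    W t.+1 = W t - eta *: S.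
End Defs.

(* Main.v *)
Require Import Defs.
From HB Require Import structures.
From mathcomp Require Import all_boot all_order all_algebra.
From mathcomp Require Import all_classical all_reals all_analysis.
From mathcomp Require Import ring lra.
From mathcomp Require Import fingroup perm.
Import Order.TTheory GRing.Theory Num.Theory.
Import numFieldNormedType.Exports.
Local Open Scope ring_scope.
Section D.
Variable R : realType.

Lemma sumexp_gt0 n (f : 'I_n -> R) (k0 : 'I_n) : 0 < \sum_k expR (f k).
Proof.
rewrite (bigD1 k0) //= ltr_pwDl ?expR_gt0 //.
by apply: sumr_ge0 => k _; apply/ltW/expR_gt0.
Qed.

Lemma deriv_aff (a c : R) : is_derive (0:R) 1 (fun s : R => a + s * c) c.
Proof.
have h1 : is_derive (0:R) (1:R) (fun s : R => s * c) c.
  have := @is_deriveM R R^o id (cst c) 0 1 1 0 (is_derive_id _ _) (is_derive_cst _ _ _).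
  by rewrite /= scaler0 add0r /GRing.scale /= mulr1.
have := @is_deriveD R R^o R^o (cst a) (fun s : R => s * c) 0 1 0 c (is_derive_cst _ _ _) h1.
by rewrite add0r.
Qed.

Lemma deriv_lse n (L c : 'I_n -> R) (k0 : 'I_n) :
  is_derive (0:R) 1 (fun s => ln (\sum_k expR (L k + s * c k)))
    ((\sum_k expR (L k))^-1 * \sum_k c k * expR (L k)).
Proof.
have -> : (fun s => ln (\sum_k expR (L k + s * c k))) =
   (@ln R) \o (\sum_k (fun s => expR (L k + s * c k))).
  by apply: funext => s /=; rewrite fct_sumE.
apply: is_derive1_comp.
  rewrite fct_sumE.
  under eq_bigr do rewrite mul0r addr0.
  have := is_derive1_ln (sumexp_gt0 _ L k0). exact.
apply: is_derive_sum => k.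
have hin := deriv_aff (L k) (c k).
have H := @is_derive1_comp R expR (fun s => L k + s * c k) 0 _ _ (is_derive_expR (L k + 0 * c k)) hin.
move: H; rewrite /comp mul0r addr0 mulrC. exact.

Qed.
Implicit Types f g : R -> R.

Lemma dZ (k : R) f df : is_derive (0:R) 1 f df -> is_derive (0:R) 1 (fun s => k * f s) (k * df).
Proof. by move=> h; have := @is_deriveZ R R^o R^o f k 0 1 df h. Qed.
Lemma dB f g df dg : is_derive (0:R) 1 f df -> is_derive (0:R) 1 g dg ->
  is_derive (0:R) 1 (fun s => f s - g s) (df - dg).
Proof. by move=> h1 h2; have := @is_deriveB R R^o R^o f g 0 1 df dg h1 h2. Qed.
Lemma dD f g df dg : is_derive (0:R) 1 f df -> is_derive (0:R) 1 g dg ->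
  is_derive (0:R) 1 (fun s => f s + g s) (df + dg).
Proof. by move=> h1 h2; have := @is_deriveD R R^o R^o f g 0 1 df dg h1 h2. Qed.
Lemma dN f df : is_derive (0:R) 1 f df -> is_derive (0:R) 1 (fun s => - f s) (- df).
Proof. by move=> h1; have := @is_deriveN R R^o R^o f 0 1 df h1. Qed.
Lemma dS n (h : 'I_n -> R -> R) dh : (forall i, is_derive (0:R) 1 (h i) (dh i)) ->
  is_derive (0:R) 1 (fun s => \sum_i h i s) (\sum_i dh i).
Proof.
move=> H; have := @is_derive_sum R R^o R^o n h 0 1 dh H.
suff -> : (\sum_(i < n) h i) = (fun s => \sum_i h i s) by [].
by apply: funext => s; rewrite fct_sumE.
Qed.
Arguments dZ k {f df}.
Arguments dB {f g df dg}.
Arguments dD {f g df dg}.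
Arguments dN {f df}.
Arguments dS {n h dh}.
Section G.
Variables (M C : nat).
Local Notation K := (M * C)%N.

Lemma delta_conj (Et E : 'M[R]_K) a b k j :
  (Et^T *m delta_mx a b *m E) k j = Et a k * E b j.
Proof.
rewrite mxE (bigD1 b) //= big1 ?addr0; last first.
  move=> jj /negbTE hj; rewrite mxE big1 ?mul0r // => i _.
  by rewrite !mxE hj andbF mulr0.
rewrite mxE (bigD1 a) //= big1 ?addr0; last first.
  by move=> i /negbTE hi; rewrite !mxE hi mulr0.
by rewrite !mxE !eqxx mulr1.
Qed.

Definition Gam (pt : 'I_M -> R) (Et E W : 'M[R]_K) : 'M[R]_K :=
  \matrix_(k, j) (pitem pt j * (phat Et E W k j - (k == j)%:R)).

Lemma grad_val (pt : 'I_M -> R) (Et E W : 'M[R]_K) a b :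
  is_derive (0:R) 1 (fun s => loss pt Et E (W + s *: delta_mx a b))
    ((Et *m Gam pt Et E W *m E^T) a b).
Proof.
set L := Et^T *m W *m E; set Cd := Et^T *m delta_mx a b *m E.
have hl s k j : logit Et E (W + s *: delta_mx a b) k j = L k j + s * Cd k j.
  by rewrite /logit mulmxDr mulmxDl -scalemxAr -scalemxAl !mxE.
have -> : (fun s => loss pt Et E (W + s *: delta_mx a b)) =
  (fun s => - \sum_j (pitem pt j * (L j j + s * Cd j j) -
      pitem pt j * ln (\sum_k expR (L k j + s * Cd k j)))).
  apply: funext => s; rewrite /loss /phat; congr (- _); apply: eq_bigr => j _.
  rewrite hl; under eq_bigr do rewrite hl.
  rewrite ln_div ?expRK ?mulrBr // posrE ?expR_gt0 //.
  exact: (@sumexp_gt0 _ (fun i => L i j + s * Cd i j) j).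
have H := dN (dS (fun j => dB (dZ (pitem pt j) (deriv_aff (L j j) (Cd j j)))
   (dZ (pitem pt j) (@deriv_lse _ (fun k => L k j) (fun k => Cd k j) j)))).
apply: (is_derive_eq H).
rewrite mxE -sumrN; apply: eq_bigr => j _.
have e1 : \sum_k Cd k j * expR (L k j) = \sum_k Et a k * E b j * expR (L k j).
  by apply: eq_bigr => k _; rewrite /Cd delta_conj.
rewrite e1 /Cd delta_conj.
rewrite !mxE mulr_suml.
under [RHS]eq_bigr => k _ do rewrite !mxE /phat /logit -/L.
set S := \sum_k expR (L k j).
have -> : \sum_k Et a k * (pitem pt j * (expR (L k j) / S - (k == j)%:R)) * E b j
   = \sum_k (pitem pt j * S^-1 * (Et a k * E b j * expR (L k j))) -
     \sum_k (Et a k * E b j * pitem pt j * (k == j)%:R).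
  by rewrite -sumrB; apply: eq_bigr => k _; ring.
have hd : \sum_k (Et a k * E b j * pitem pt j * (k == j)%:R) = Et a j * E b j * pitem pt j.
  rewrite (bigD1 j) //= eqxx mulr1 big1 ?addr0 // => k /negbTE ->; by rewrite mulr0.
rewrite hd -mulr_sumr; ring.
Qed.
End G.
End D.

Set Implicit Arguments. Unset Strict Implicit.

Section U.
Variable R : realType.

Lemma orthT n (V : 'M[R]_n) : orthogonal_mx V -> V *m V^T = 1%:M.
Proof. by move=> h; apply: mulmx1C. Qed.
Arguments orthT {n V}.

Lemma oL n p (U : 'M[R]_n) (X : 'M[R]_(n, p)) : orthogonal_mx U -> U^T *m (U *m X) = X.
Proof. by move=> h; rewrite mulmxA h mul1mx. Qed.
Lemma oR n p (U : 'M[R]_n) (X : 'M[R]_(n, p)) : orthogonal_mx U -> U *m (U^T *m X) = X.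
Proof. by move=> h; rewrite mulmxA (orthT h) mul1mx. Qed.

Lemma sq_eq_nonneg (x y : R) : 0 <= x -> 0 <= y -> x * x = y * y -> x = y.
Proof.
move=> hx hy h.
have : (x - y) * (x + y) = 0 by rewrite mulrDr !mulrBl h; ring.
move/eqP; rewrite mulf_eq0 => /orP [/eqP|/eqP] h2; first by apply/eqP; rewrite -subr_eq0 h2.
have hx0 : x = 0 by lra.
have hy0 : y = 0 by lra.
by rewrite hx0 hy0.
Qed.

Lemma diag_comm n (d d' : 'rV[R]_n) (Q : 'M[R]_n) (f : R -> R) :
  (forall k l, Q k l != 0 -> d 0 k = d' 0 l) ->
  diag_mx (map_mx f d) *m Q = Q *m diag_mx (map_mx f d').
Proof.
move=> h; rewrite mul_diag_mx mul_mx_diag; apply/matrixP => k l; rewrite !mxE.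
have [->|nz] := eqVneq (Q k l) 0; first by rewrite mulr0 mul0r.
by rewrite (h _ _ nz) mulrC.
Qed.

Lemma dd_Q n (d d' : 'rV[R]_n) (Q : 'M[R]_n) :
  (forall k, 0 <= d 0 k) -> (forall k, 0 <= d' 0 k) ->
  diag_mx d *m diag_mx d *m Q = Q *m diag_mx d' *m diag_mx d' ->
  forall k l, Q k l != 0 -> d 0 k = d' 0 l.
Proof.
move=> d0 d0' hDQ k l nz; apply: sq_eq_nonneg => //.
move/matrixP/(_ k l): hDQ; rewrite -mulmxA !mul_diag_mx !mul_mx_diag !mxE => h.
apply: (mulIf nz); rewrite -mulrA h; ring.
Qed.

Lemma msgn_unique n (G S S' : 'M[R]_n) : is_msgn G S -> is_msgn G S' -> S = S'.
Proof.
move=> [U [V [d [oU [oV [d0 [hG hS]]]]]]] [U' [V' [d' [oU' [oV' [d0' [hG' hS']]]]]]].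
set Q := V^T *m V'.
have GtG1 : G^T *m G = V *m diag_mx d *m diag_mx d *m V^T.
  by rewrite {1}hG !trmx_mul trmxK tr_diag_mx hG -!mulmxA oL.
have GtG2 : G^T *m G = V' *m diag_mx d' *m diag_mx d' *m V'^T.
  by rewrite {1}hG' !trmx_mul trmxK tr_diag_mx hG' -!mulmxA oL.
have hDQ : diag_mx d *m diag_mx d *m Q = Q *m diag_mx d' *m diag_mx d'.
  have e1 : V^T *m (G^T *m G) *m V' = diag_mx d *m diag_mx d *m Q.
    by rewrite GtG1 /Q -!mulmxA oL.
  have e2 : V^T *m (G^T *m G) *m V' = Q *m diag_mx d' *m diag_mx d'.
    by rewrite GtG2 /Q -!mulmxA oV' mulmx1.
  by rewrite -e1 e2.
have hQ : forall k l, Q k l != 0 -> d 0 k = d' 0 l.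
  exact: (dd_Q d0 d0' hDQ).
have hDQ1 := diag_comm id hQ.
have hDQs := diag_comm Num.sg hQ.
rewrite !map_mx_id // in hDQ1.
have hU : U' *m diag_mx d' = U *m Q *m diag_mx d'.
  have -> : U' *m diag_mx d' = G *m V'.
    by rewrite hG' -mulmxA oV' mulmx1.
  by rewrite hG -!mulmxA (mulmxA V^T V') -/Q hDQ1 !mulmxA.
have hU2 : U' *m diag_mx (map_mx Num.sg d') = U *m Q *m diag_mx (map_mx Num.sg d').
  apply/matrixP => a l; move/matrixP/(_ a l): hU; rewrite !mul_mx_diag !mxE => h.
  have [z|nz] := eqVneq (d' 0 l) 0; first by rewrite z sgr0 !mulr0.
  by rewrite (mulIf nz h).
rewrite hS hS' hU2 -(mulmxA U Q) -hDQs /Q -!mulmxA (orthT oV') mulmx1.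
by [].
Qed.

Lemma msgn_conj n (G S P Q : 'M[R]_n) : is_msgn G S -> orthogonal_mx P -> orthogonal_mx Q ->
  is_msgn (P *m G *m Q^T) (P *m S *m Q^T).
Proof.
move=> [U [V [d [oU [oV [d0 [hG hS]]]]]]] oP oQ.
exists (P *m U), (Q *m V), d; split; last split; last split => //; last split.
- by rewrite /orthogonal_mx trmx_mul mulmxA -(mulmxA U^T) oP mulmx1 oU.
- by rewrite /orthogonal_mx trmx_mul mulmxA -(mulmxA V^T) oQ mulmx1 oV.
- by rewrite hG trmx_mul !mulmxA.
- by rewrite hS trmx_mul !mulmxA.
Qed.
End U.

Section Main.
Variables (R : realType) (M C : nat).
Local Notation K := (M * C)%N.
Local Notation Gam := (@Gam R M C).

Definition inv (s : {perm 'I_K}) (X : 'M[R]_K) := forall x y, X (s x) (s y) = X x y.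

Lemma perm_conj (s : {perm 'I_K}) (X : 'M[R]_K) :
  perm_mx s *m X *m (perm_mx s)^T = \matrix_(x, y) X (s x) (s y).
Proof.
rewrite -row_permE tr_perm_mx -col_permE; apply/matrixP => x y; by rewrite !mxE.
Qed.

Lemma perm_orth (s : {perm 'I_K}) : orthogonal_mx (perm_mx s : 'M[R]_K).
Proof. by rewrite /orthogonal_mx tr_perm_mx -perm_mxM mulVg perm_mx1. Qed.

Lemma orthTr n (A : 'M[R]_n) : orthogonal_mx A -> orthogonal_mx A^T.
Proof. by move=> h; rewrite /orthogonal_mx trmxK; apply: orthT. Qed.

Lemma step (pt : 'I_M -> R) (Et E W0 W1 : 'M[R]_K) (s : {perm 'I_K}) :
  orthogonal_mx E -> orthogonal_mx Et ->
  (forall x, Defs.group (s x) = Defs.group x) ->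
  inv s (Et^T *m W0 *m E) ->
  (exists G S, is_gradient (loss pt Et E) W0 G /\ is_msgn G S /\ W1 = W0 - 1 *: S) ->
  inv s (Et^T *m W1 *m E).
Proof.
move=> oE oEt hgr hinv [G [S [hg [hS ->]]]].
have hG : G = Et *m Gam pt Et E W0 *m E^T.
  apply/matrixP => a b.
  have e1 := @derive_val _ _ _ _ _ _ _ (hg a b).
  have e2 := @derive_val _ _ _ _ _ _ _ (@grad_val R M C pt Et E W0 a b).
  by rewrite -e1 -e2.
have hGh : Et^T *m G *m E = Gam pt Et E W0.
  by rewrite hG -!mulmxA oL // oE mulmx1.
have hS1 : is_msgn (Gam pt Et E W0) (Et^T *m S *m E).
  have := msgn_conj hS (orthTr oEt) (orthTr oE).
  by rewrite !trmxK hGh.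
have hGam : inv s (Gam pt Et E W0).
  move=> x y; rewrite !mxE /pitem hgr (inj_eq (@perm_inj _ s)) /phat /logit.
  rewrite !hinv; congr (_ * (_ / _ - _)).
  by rewrite (reindex_inj (@perm_inj _ s)) /=; apply: eq_bigr => k _; rewrite hinv.
have hPS := msgn_conj hS1 (perm_orth s) (perm_orth s).
have eG : perm_mx s *m Gam pt Et E W0 *m (perm_mx s)^T = Gam pt Et E W0.
  by rewrite perm_conj; apply/matrixP => x y; rewrite mxE hGam.
rewrite eG in hPS.
have := msgn_unique hS1 hPS; rewrite perm_conj => /matrixP hm.
move=> x y.
have hsub : forall (A B : 'M[R]_K) i j, (A - B) i j = A i j - B i j.
  by move=> A B i j; rewrite !mxE.
have := hm x y; rewrite mxE => h.
by rewrite mulmxBr mulmxBl scale1r !hsub h hinv.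
Qed.

Lemma group_item (i : 'I_M) (r : 'I_C) : Defs.group (item i r) = i.
Proof.
apply: val_inj => /=.
have hC : (0 < C)%N by case: r => r /=; case: C => //.
by rewrite divnMDl // divn_small ?addn0.
Qed.

Lemma item_eq (i j : 'I_M) (r s : 'I_C) :
  (item i r == item j s) = (i == j) && (r == s).
Proof.
apply/eqP/andP => [h|[/eqP -> /eqP ->]] //.
have hij : i = j by rewrite -(group_item i r) h group_item.
split; first by rewrite hij.
move: h; rewrite hij => /(congr1 val) /= /eqP; rewrite eqn_add2l => /eqP h.
by apply/eqP; apply: val_inj.
Qed.

Definition tp (i : 'I_M) (r r' : 'I_C) : {perm 'I_K} := tperm (item i r) (item i r').

Lemma tp_group i r r' x : Defs.group (tp i r r' x) = Defs.group x.
Proof.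
rewrite /tp; case: tpermP => [->|->|] //; by rewrite !group_item.
Qed.

Lemma tp_fix i r r' j s : (i != j) || ((s != r) && (s != r')) -> tp i r r' (item j s) = item j s.
Proof.
move=> h; rewrite /tp tpermD // item_eq negb_and.
- by case/orP: h => [->|/andP [h1 _]] //; rewrite orbC eq_sym h1.
- by case/orP: h => [->|/andP [_ h1]] //; rewrite orbC eq_sym h1.
Qed.

Lemma tpL i r r' : tp i r r' (item i r) = item i r'.
Proof. by rewrite /tp tpermL. Qed.
Lemma tpR i r r' : tp i r r' (item i r') = item i r.
Proof. by rewrite /tp tpermR. Qed.
End Main.

Unset Implicit Arguments.
Theorem lemmaD2 (R : realType) (M C : nat) (pt : 'I_M -> R)
  (E Et : 'M[R]_(M * C)) (W : nat -> 'M[R]_(M * C)) :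
  (2 <= C)%N ->
  (forall i j : 'I_M, (i < j)%N -> pt j < pt i) ->
  (forall i, 0 < pt i) ->
  \sum_(i < M) pt i = 1 ->
  orthogonal_mx E -> orthogonal_mx Et ->
  muon_iterates pt Et E 1 W ->
  forall (t : nat) (c0 c1 : 'I_C), nat_of_ord c0 = 0%N -> nat_of_ord c1 = 1%N ->
  forall (i j : 'I_M) (r s : 'I_C),
    let Wh := Et^T *m W t *m E in
    Wh (item i r) (item j s) =
      if i == j then
        (if r == s then Wh (item i c0) (item i c0)   (* omega_{i,t} *)
         else Wh (item i c1) (item i c0))            (* mu_{i,t} *)
      else Wh (item i c0) (item j c0).               (* gamma_{i,j,t} *)
Proof.
move=> hC _ _ _ oE oEt [W0 hW] t c0 c1 hc0 hc1 i j r s Wh.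
have hinv : forall t i r r', inv (tp i r r') (Et^T *m W t *m E).
  elim=> [|t' IH] i' r0 r'.
    by rewrite W0 mulmx0 mul0mx => x y; rewrite !mxE.
  exact: step oE oEt (tp_group i' r0 r') (IH i' r0 r') (hW t').
have H : forall i r r' x y, Wh (tp i r r' x) (tp i r r' y) = Wh x y.
  by move=> *; apply: hinv.
have c01 : c0 != c1 by apply/eqP => /(congr1 val); rewrite /= hc0 hc1.
have [<-|nij] := eqVneq i j.
  have [<-|nrs] := eqVneq r s.
    by rewrite -(H i r c0 (item i r) (item i r)) tpL.
  have [er|ner] := eqVneq r c0.
    subst r.
    have [es|nes] := eqVneq s c1.
      by subst s; rewrite -(H i c0 c1 (item i c0) (item i c1)) tpL tpR.
    rewrite -(H i c0 c1 (item i c0) (item i s)) tpL tp_fix; last first.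
      by rewrite eqxx /= eq_sym (negbTE nrs) nes.
    rewrite -(H i s c0 (item i c1) (item i s)) tpL tp_fix //.
    by rewrite eqxx /= eq_sym nes eq_sym c01.
  have -> : Wh (item i r) (item i s) = Wh (item i r) (item i c0).
    have [es|nes] := eqVneq s c0; first by rewrite es.
    rewrite -(H i s c0 (item i r) (item i s)) tpL tp_fix //.
    by rewrite eqxx /= ner nrs.
  rewrite -(H i r c1 (item i r) (item i c0)) tpL tp_fix //.
  by rewrite eqxx /= eq_sym ner c01.
rewrite -(H i r c0 (item i r) (item j s)) tpL tp_fix; last by rewrite nij.
rewrite -(H j s c0 (item i c0) (item j s)) tpL tp_fix //.
by rewrite eq_sym nij.
Qed.
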